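(* Consider the following setting. Let $x_1,\ldots,x_n$ be points of a set $\mathcal X$, $g:\mathcal X\to\mathbb R$, and $Y_i=g(x_i)+\varepsilon_i$, $i=1,\ldots,n$, with $(\varepsilon_i)$ i.i.d. real random variables. Let $\rho:\mathbb R\to[0,\infty)$ be convex with $\rho(0)=0$, and for $U\subset\mathcal X$ let $m(Y_i,\,x_i\in U)$ be a selected minimizer over $\mu\in\mathbb R$ of $\sum_{i:x_i\in U}\rho(Y_i-\mu)$. Assume the following monotonicity property (Assumption M): for any set $S$ and any partition $S=\bigcup_jS_j$ into pairwise disjoint sets $S_j$, and any realisation of the data, $\min_j m(Y_i,\,x_i\in S_j)\le m(Y_i,\,x_i\in S)\le\max_j m(Y_i,\,x_i\in S_j)$. Let $U_0\subset U_1\subset\cdots\subset U_K$ be nested subsets of $\mathcal X$, $\tilde\theta_k:=m(Y_i,\,x_i\in U_k)$ and $\tilde\theta_{(k+1)\setminus k}:=m(Y_i,\,x_i\in U_{k+1}\setminus U_k)$. Fix $r\ge1$ and define $s_j$, $s_{kj}$, the critical values $z_0,\ldots,z_{K-1}>0$, $z_K:=1$, the selected index $\hat k$ and $\hat\theta:=\tilde\theta_{\hat k}$ as in the context. Then for every $k=0,\ldots,K-1$ and every realisation of the data, \[\big|\hat\theta-\tilde\theta_k\big|\,\mathbf 1(\hat k>k)\le\max_{j=k+1,\ldots,K-1}\big(z_ks_{jk}+z_{j+1}s_{j+1}\big).\]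
   Context: $\mathbb E_0$ denotes expectation under the model with $g\equiv0$ (i.e. $Y_i=\varepsilon_i$), and the stochastic error levels are $s_j:=\mathbb E_0[|\tilde\theta_j|^r]^{1/r}$ and $s_{kj}:=\mathbb E_0[|\tilde\theta_{(k+1)\setminus k}-\tilde\theta_j|^r]^{1/r}$ for $0\le j\le k\le K-1$ (assumed finite). Given critical values $z_0,\ldots,z_{K-1}>0$ and $z_K:=1$, the selected index is \[\hat k:=\inf\Big\{k\in\{0,\ldots,K-1\}\,\Big|\,\exists j\le k:\ |\tilde\theta_{(k+1)\setminus k}-\tilde\theta_j|>z_js_{kj}+z_{k+1}s_{k+1}\Big\}\wedge K\] (with $\inf\emptyset=\infty$), i.e. $k$ is increased sequentially from $0$ as long as all these tests are passed. *)

(* Defs.v *)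
From HB Require Import structures.
From mathcomp Require Import all_boot all_order all_algebra.
From mathcomp Require Import all_classical all_reals all_analysis.
Set Implicit Arguments. Unset Strict Implicit. Unset Printing Implicit Defensive.
Import Order.TTheory GRing.Theory Num.Theory.
Local Open Scope classical_set_scope.
Local Open Scope ring_scope.

Definition rho_convex (R : realType) (rho : R -> R) : Prop :=
  forall a b t : R, 0 <= t <= 1 ->
    rho (t * a + (1 - t) * b) <= t * rho a + (1 - t) * rho b.

Definition sample (X : Type) (n : nat) (x : 'I_n -> X) (U : set X) : pred 'I_n :=
  fun i => `[< U (x i) >].

Definition is_selected_minimizer (R : realType) (n : nat) (rho : R -> R)
  (m : pred 'I_n -> ('I_n -> R) -> R) : Prop :=
  forall (I : pred 'I_n) (Y : 'I_n -> R) (mu : R),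
    \sum_(i | I i) rho (Y i - m I Y) <= \sum_(i | I i) rho (Y i - mu).

Definition assumption_M (R : realType) (X : Type) (n : nat) (x : 'I_n -> X)
  (m : pred 'I_n -> ('I_n -> R) -> R) : Prop :=
  forall (S : set X) (p : nat) (Sp : 'I_p.+1 -> set X),
    (forall a b, a != b -> Sp a `&` Sp b = set0) ->
    S = \bigcup_a Sp a ->
    forall Y : 'I_n -> R,
      (exists a, m (sample x (Sp a)) Y <= m (sample x S) Y) /\
      (exists b, m (sample x S) Y <= m (sample x (Sp b)) Y).

Definition iid_family (d : measure_display) (T : measurableType d) (R : realType)
  (P : probability T R) (n : nat) (eps : 'I_n -> T -> R) : Prop :=
  [/\ (forall i, measurable_fun setT (eps i)),
      (forall i j (A : set R), measurable A ->
          P (eps i @^-1` A) = P (eps j @^-1` A)) &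
      (forall (J : {set 'I_n}) (A : 'I_n -> set R), (forall i, measurable (A i)) ->
          P [set w | forall i, i \in J -> A i (eps i w)] =
          (\prod_(i in J) P (eps i @^-1` A i))%E)].

(* r-th moment of f(data) under the model g = 0 (data Y_i = eps_i) *)
Definition null_moment (d : measure_display) (T : measurableType d) (R : realType)
  (P : probability T R) (n : nat) (eps : 'I_n -> T -> R)
  (f : ('I_n -> R) -> R) (r : R) : \bar R :=
  (\int[P]_w ((`|f (fun i => eps i w)| `^ r)%:E))%E.

Definition err_level (d : measure_display) (T : measurableType d) (R : realType)
  (P : probability T R) (n : nat) (eps : 'I_n -> T -> R)
  (f : ('I_n -> R) -> R) (r : R) : R :=
  (fine (null_moment P eps f r)) `^ r^-1.

(* selected index: smallest k < K failing a test, else K *)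
Definition khat (R : realType) (K : nat) (z s1 : nat -> R) (s2 : nat -> nat -> R)
  (th thd : nat -> R) : nat :=
  find (fun k => [exists j : 'I_k.+1,
                   z j * s2 k j + z k.+1 * s1 k.+1 < `|thd k - th j|])
       (iota 0 K).

(* Main.v *)
Require Import Defs.
From HB Require Import structures.
From mathcomp Require Import all_boot all_order all_algebra.
From mathcomp Require Import all_classical all_reals all_analysis.
From mathcomp Require Import lra zify.
Import Order.TTheory GRing.Theory Num.Theory.
Local Open Scope classical_set_scope.
Local Open Scope ring_scope.

Theorem proposition3p4 (R : realType) (d : measure_display) (T : measurableType d)
  (P : probability T R) (X : Type) (n : nat) (x : 'I_n -> X) (g : X -> R)
  (eps : 'I_n -> T -> R) (rho : R -> R) (m : pred 'I_n -> ('I_n -> R) -> R)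
  (K : nat) (U : nat -> set X) (r : R) (z : nat -> R) :
  iid_family P eps ->
  (forall t, 0 <= rho t) -> rho 0 = 0 -> rho_convex rho ->
  is_selected_minimizer rho m ->
  assumption_M x m ->
  (forall k, (k < K)%N -> U k `<=` U k.+1) ->
  1 <= r ->
  (forall j, (j <= K)%N ->
     (null_moment P eps (m (sample x (U j))) r < +oo)%E) ->
  (forall k j, (j <= k < K)%N ->
     (null_moment P eps
        (fun Y => (m (sample x (U k.+1 `\` U k)) Y - m (sample x (U j)) Y)%R) r
      < +oo)%E) ->
  (forall j, (j < K)%N -> 0 < z j) -> z K = 1 ->
  let s1 := fun j => err_level P eps (m (sample x (U j))) r in
  let s2 := fun k j => err_level P eps
        (fun Y => m (sample x (U k.+1 `\` U k)) Y - m (sample x (U j)) Y) r in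
  forall w : T,
  let Y := fun i => g (x i) + eps i w in
  let th := fun k => m (sample x (U k)) Y in
  let thd := fun k => m (sample x (U k.+1 `\` U k)) Y in
  let kh := khat K z s1 s2 th thd in
  let theta_hat := th kh in
  forall k, (k < K)%N ->
  exists2 j, (k <= j < K)%N &
    `|theta_hat - th k| * (k < kh)%N%:R <= z k * s2 j k + z j.+1 * s1 j.+1.
Proof.
move=> _ _ _ _ _ HM HU _ _ _ zpos zK s1 s2 w Y th thd kh theta_hat k kK.
have s1ge0 j : 0 <= s1 j by rewrite /s1 /err_level powR_ge0.
have s2ge0 a b : 0 <= s2 a b by rewrite /s2 /err_level powR_ge0.
have zge0 j : (j <= K)%N -> 0 <= z j.
  move=> hj; case: (ltnP j K) => h; first exact: ltW (zpos _ h).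
  have -> : j = K by apply/eqP; rewrite eqn_leq hj h.
  by rewrite zK.
have bnd0 j : (j < K)%N -> 0 <= z k * s2 j k + z j.+1 * s1 j.+1.
  move=> hj; apply: addr_ge0; apply: mulr_ge0.
  - by apply: zge0; apply: ltnW.
  - exact: s2ge0.
  - exact: zge0.
  - exact: s1ge0.
have khK : (kh <= K)%N.
  by rewrite /kh /khat (leq_trans (find_size _ _)) // size_iota.
have test j : (k <= j)%N -> (j < kh)%N ->
    `|thd j - th k| <= z k * s2 j k + z j.+1 * s1 j.+1.
  move=> hkj hjk.
  have := before_find 0%N hjk.
  rewrite nth_iota ?add0n; last lia.
  have hk1 : (k < j.+1)%N by [].
  move/negbT/existsPn => /(_ (Ordinal hk1)) /=.
  by rewrite -leNgt.
have Umono0 i t : (i + t <= K)%N -> U i `<=` U (i + t)%N.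
  elim: t => [|t IH] h; first by rewrite addn0.
  move=> y /(IH ltac:(lia)) yi; rewrite addnS; apply: HU => //; lia.
have Umono i j : (i <= j <= K)%N -> U i `<=` U j.
  move=> /andP[hij hjK]; have := Umono0 i (j - i)%N; rewrite subnKC //; apply.
  exact: hjK.
case: (leqP kh k) => hkh.
  exists k; first by rewrite leqnn kK.
  rewrite mulr0; exact: bnd0.
rewrite mulr1.
pose p := (kh - k)%N.
pose Spn (a : nat) : set X :=
  match a with 0 => U k | a'.+1 => U (k + a')%N.+1 `\` U (k + a')%N end.
have Spn_sub a : (a <= p)%N -> Spn a `<=` U kh.
  case: a => [|a] ha /=; first by apply: Umono; lia.
  move=> y [yi _]; move: y yi; apply: Umono; lia.
have disj a b : (a < b <= p)%N -> Spn a `&` Spn b = set0.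
  case: b => [|b] // /andP[hab hb].
  have sub : Spn a `<=` U (k + b)%N.
    case: a hab => [|a] hab /=; first by apply: Umono; lia.
    move=> y [yi _]; move: y yi; apply: Umono; lia.
  apply/seteqP; split => y //= [ya [_ nyb]]; apply: nyb; exact: sub.
have piece a : (a <= p)%N -> m (sample x (Spn a)) Y = th k \/
    exists2 j, (k <= j < kh)%N & m (sample x (Spn a)) Y = thd j.
  case: a => [|a] ha; [by left | right].
  exists (k + a)%N => //; lia.
have cover : U kh = \bigcup_(a : 'I_p.+1) Spn a.
  apply/seteqP; split => y.
    move=> yk.
    have H t : (t <= p)%N -> U (k + t)%N y -> exists2 a, (a <= t)%N & Spn a y.
      elim: t => [|t IH] ht.
        by rewrite addn0 => yk'; exists 0%N.
      move=> yt; case: (pselect (U (k + t)%N y)) => hy.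
        by have [a ha ya] := IH ltac:(lia) hy; exists a => //; lia.
      by exists t.+1 => //=; split => //; rewrite -addnS.
    have [a ha ya] := H p (leqnn _) ltac:(by rewrite subnKC // ltnW).
    have ha' : (a < p.+1)%N by lia.
    by exists (Ordinal ha').
  move=> [a _ ya]; apply: (Spn_sub a) => //.
  by have := ltn_ord a; lia.
have Hdisj : forall a b : 'I_p.+1, a != b -> Spn a `&` Spn b = set0.
  move=> a b hab; case: (ltngtP a b) => h.
  - by apply: disj; have := ltn_ord b; lia.
  - by rewrite setIC; apply: disj; have := ltn_ord a; lia.
  - by move: hab; rewrite (val_inj h) eqxx.
have [[a Ha] [b Hb]] := HM (U kh) p (fun a => Spn a) Hdisj cover Y.
have hpa : (a <= p)%N by have := ltn_ord a; lia.
have hpb : (b <= p)%N by have := ltn_ord b; lia.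
rewrite /theta_hat.
case: (leP (th k) (th kh)) => hc.
  rewrite ger0_norm ?subr_ge0 //.
  have Hb' : th kh <= m (sample x (Spn b)) Y by exact: Hb.
  case: (piece b hpb) => [e|[j hj e]]; rewrite e in Hb'.
    exists k; first by rewrite leqnn kK.
    have := bnd0 k kK; lra.
  exists j; first by move: hj khK; lia.
  apply: le_trans (test j _ _); [|lia|lia].
  apply: le_trans (ler_norm _); lra.
rewrite ltr0_norm ?subr_lt0 //.
have Ha' : m (sample x (Spn a)) Y <= th kh by exact: Ha.
case: (piece a hpa) => [e|[j hj e]]; rewrite e in Ha'.
  exists k; first by rewrite leqnn kK.
  have := bnd0 k kK; lra.
exists j; first by move: hj khK; lia.
apply: le_trans (test j _ _); [|lia|lia].
rewrite distrC; apply: le_trans (ler_norm _); lra.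
Qed.
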